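(* Assume the standing setup. Let $j_1,\dots,j_{d+1}\in[k]$. If $\alpha_{j_1},\dots,\alpha_{j_{d+1}}$ are linearly independent in $V_1$, then $\beta_{j_1},\dots,\beta_{j_{d+1}}$ are linearly independent in $V_2$.
   Context: Standing setup: $\mathbb{F}$ is a field of characteristic $0$; $W$ is a group with finite generating set $S=\{s_1,\dots,s_k\}$. A linear map on a finite-dimensional space is a (generalized) reflection if it is diagonalizable and $s-\operatorname{Id}$ has rank $1$; a reflection vector is a nonzero vector in $\operatorname{Im}(s-\operatorname{Id})$. $(V_1,\rho_1)$, $(V_2,\rho_2)$ are irreducible reflection representations of $(W,S)$ (each $s_i$ acts by a reflection), both of dimension $n$. For each $i\in[k]$, $\alpha_i\in V_1$ is a chosen reflection vector of $s_i$ with $s_i\alpha_i=\lambda_i\alpha_i$ and $\beta_i\in V_2$ a chosen reflection vector of $s_i$ with $s_i\beta_i=\mu_i\beta_i$. $d$ is an integer with $1\le d\le n-1$, and $\psi:\bigwedge^dV_1\to\bigwedge^dV_2$ is an isomorphism of $W$-modules ($W$ acting diagonally). *)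

(* Defs.v *)
From HB Require Import structures.
From mathcomp Require Import all_boot all_order all_algebra.

Set Implicit Arguments. Unset Strict Implicit. Unset Printing Implicit Defensive.
Import Order.TTheory GRing.Theory Num.Theory.
Local Open Scope ring_scope.

(* Vectors of an n-dimensional F-space are column vectors 'cV[F]_n;
   a linear representation of a (possibly infinite) group W is a group
   homomorphism rho : W -> 'M[F]_n, acting by  w . v := rho w *m v. *)

Definition generates (W : groupType) (k : nat) (s : 'I_k -> W) : Prop :=
  forall P : W -> Prop,
    P 1%g -> (forall x y, P x -> P y -> P (x * y)%g) ->
    (forall x, P x -> P (x^-1)%g) -> (forall i, P (s i)) ->
    forall w, P w.

Definition is_rep (F : fieldType) (W : groupType) (n : nat)
    (rho : W -> 'M[F]_n) : Prop :=
  rho 1%g = 1%:M /\ forall x y : W, rho (x * y)%g = rho x *m rho y.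

(* A subspace of F^n is encoded (mxalgebra style) by a matrix U whose rows,
   transposed, span it.  It is W-stable iff rho w maps it into itself. *)
Definition rep_stable (F : fieldType) (W : groupType) (n : nat)
    (rho : W -> 'M[F]_n) (U : 'M[F]_n) : Prop :=
  forall w : W, (U *m (rho w)^T <= U)%MS.

Definition rep_irreducible (F : fieldType) (W : groupType) (n : nat)
    (rho : W -> 'M[F]_n) : Prop :=
  (0 < n)%N /\
  forall U : 'M[F]_n, rep_stable rho U -> (\rank U = 0)%N \/ row_full U.

Definition is_reflection (F : fieldType) (n : nat) (M : 'M[F]_n) : Prop :=
  diagonalizable M /\ \rank (M - 1%:M) = 1%N.

Definition reflection_vector (F : fieldType) (n : nat) (M : 'M[F]_n)
    (v : 'cV[F]_n) : Prop :=
  v != 0 /\ (v^T <= (M - 1%:M)^T)%MS.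

(* The standard basis of /\^d F^n is e_{t_1} /\ ... /\ e_{t_d}
   indexed by strictly increasing d-tuples t of indices; [ext_index n d] is
   this finite index set.  The induced action of M on /\^d F^n has, in that
   basis, matrix entries the d x d minors of M (the d-th compound matrix). *)
Definition ext_index (n d : nat) :=
  {t : d.-tuple 'I_n | sorted (fun x y : 'I_n => (x < y)%N) t}.

Definition ext_dim (n d : nat) : nat := #|{: ext_index n d}|.

Definition ext_power (F : fieldType) (n d : nat) (M : 'M[F]_n)
  : 'M[F]_(ext_dim n d) :=
  \matrix_(a < ext_dim n d, b < ext_dim n d)
    \det (\matrix_(i < d, j < d)
            M (tnth (val (enum_val a)) i) (tnth (val (enum_val b)) j)).

Definition ext_W_iso (F : fieldType) (W : groupType) (n d : nat)
    (rho1 rho2 : W -> 'M[F]_n) (psi : 'M[F]_(ext_dim n d)) : Prop :=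
  psi \in unitmx /\
  forall w : W, psi *m ext_power d (rho1 w) = ext_power d (rho2 w) *m psi.

(* Main.v *)
Require Import Defs.
From mathcomp Require Import all_boot all_order all_algebra.
From mathcomp Require Import all_fingroup.
From HB Require Import structures.
Set Implicit Arguments. Unset Strict Implicit. Unset Printing Implicit Defensive.
Import Order.TTheory GRing.Theory Num.Theory.
Lemma sorted_enum_set n (A : {set 'I_n}) : sorted (fun x y : 'I_n => (x < y)%N) (enum A).
Proof.
rewrite /enum_mem -enumT; apply: sorted_filter.
  by move=> x y z; apply: ltn_trans.
by have := iota_ltn_sorted 0 n; by rewrite -val_enum_ord sorted_map.
Qed.

Section Comb.
Variables n d : nat.
Variable t0 : ext_index n d.
Implicit Types f : {ffun 'I_d -> 'I_n}.

Definition imgs f : seq 'I_n := enum [set f i | i : 'I_d].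
Definition tupf f : d.-tuple 'I_n := [tuple nth (f i) (imgs f) i | i < d].
Definition tsort f : ext_index n d := insubd t0 (tupf f).
Definition sigf f : 'S_d :=
  insubd (1%g : 'S_d) [ffun i => insubd i (index (f i) (imgs f))].
Definition hcb (p : ext_index n d * 'S_d) : {ffun 'I_d -> 'I_n} :=
  [ffun i => tnth (val p.1) (p.2 i)].

Lemma ltn_irr' : irreflexive (fun x y : 'I_n => (x < y)%N).
Proof. by move=> x; rewrite ltnn. Qed.
Lemma ltn_tr' : transitive (fun x y : 'I_n => (x < y)%N).
Proof. by move=> x y z; apply: ltn_trans. Qed.

Lemma size_imgs f : injective f -> size (imgs f) = d.
Proof. by move=> fi; rewrite /imgs -cardE card_imset // card_ord. Qed.

Lemma mem_imgs f i : f i \in imgs f.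
Proof. by rewrite /imgs mem_enum imset_f. Qed.

Lemma tupfE f : injective f -> val (tupf f) = imgs f.
Proof.
move=> fi; have sz := size_imgs fi.
case E: (imgs f) => [|x0 s'].
  by apply: size0nil; rewrite size_tuple -sz E.
rewrite -E; apply: (@eq_from_nth _ x0); first by rewrite size_tuple sz.
move=> k; rewrite size_tuple => kd.
rewrite -[k]/(nat_of_ord (Ordinal kd)) -tnth_nth tnth_mktuple /=.
by apply: set_nth_default; rewrite sz.
Qed.

Lemma tupf_sorted f : injective f -> sorted (fun x y : 'I_n => (x < y)%N) (tupf f).
Proof. by move=> fi; rewrite tupfE // sorted_enum_set. Qed.

Lemma tsortE f : injective f -> val (val (tsort f)) = imgs f.
Proof. by move=> fi; rewrite /tsort insubdK ?tupfE //; apply: tupf_sorted. Qed.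

Lemma sigfE f : injective f -> forall i, val (sigf f i) = index (f i) (imgs f).
Proof.
move=> fi.
have gv i : val (insubd i (index (f i) (imgs f)) : 'I_d) = index (f i) (imgs f).
  rewrite insubdK // -topredE /=.
  by have := index_mem (f i) (imgs f); rewrite size_imgs // mem_imgs.
have ginj : injectiveb [ffun i => insubd i (index (f i) (imgs f)) : 'I_d].
  apply/injectiveP => i j; rewrite !ffunE => /(congr1 val); rewrite !gv => e.
  by apply: fi; rewrite -(nth_index (f i) (mem_imgs f i)) e nth_index ?mem_imgs.
by move=> i; rewrite /sigf -pvalE insubdK // ffunE gv.
Qed.

Lemma hcbK f : injective f -> hcb (tsort f, sigf f) = f.
Proof.
move=> fi; apply/ffunP => i; rewrite ffunE /=.
rewrite (tnth_nth (f i)) tsortE // sigfE //.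
by rewrite nth_index // mem_imgs.
Qed.

Lemma ext_uniq (t : ext_index n d) : uniq (val t).
Proof. exact: (sorted_uniq ltn_tr' ltn_irr' (valP t)). Qed.

Lemma hcb_inj p : injective (hcb p).
Proof.
move=> i j; rewrite !ffunE => e; apply: (@perm_inj _ p.2).
exact: (tuple_uniqP _ (ext_uniq p.1)).
Qed.

Lemma imgs_hcb p : imgs (hcb p) = val (val p.1).
Proof.
apply: (irr_sorted_eq ltn_tr' ltn_irr'); first exact: sorted_enum_set.
  exact: (valP p.1).
move=> x; rewrite /imgs mem_enum; apply/imsetP/idP => [[i _ ->]|].
  by rewrite ffunE mem_tnth.
move=> /tnthP [k ->]; exists ((p.2)^-1 k)%g => //.
by rewrite ffunE permKV.
Qed.

Lemma hcbK' p : (tsort (hcb p), sigf (hcb p)) = p.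
Proof.
case: p => t sg; congr pair.
  by apply: val_inj; apply: val_inj; rewrite tsortE ?imgs_hcb //; apply: hcb_inj.
apply/permP => i; apply: val_inj; rewrite sigfE; last exact: hcb_inj.
rewrite imgs_hcb ffunE /= (tnth_nth (tnth (val t) (sg i))) index_uniq //.
  by rewrite size_tuple.
exact: ext_uniq.
Qed.

End Comb.

Local Open Scope ring_scope.
Section CB.
Variable F : fieldType.

Lemma cb_step1 n d (X : 'M[F]_(d,n)) (Y : 'M[F]_(n,d)) :
  \det (X *m Y) = \sum_(f : {ffun 'I_d -> 'I_n})
     \det (\matrix_(i, j) Y (f i) j) * \prod_i X i (f i).
Proof.
pose G s i j := X i j * Y j (s i).
transitivity (\sum_(s : 'S_d) (-1) ^+ s * \sum_(f : {ffun 'I_d -> 'I_n}) \prod_i G s i (f i)).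
  apply: eq_bigr => s _; congr (_ * _); rewrite -(bigA_distr_bigA (G s)) /=.
  by apply: eq_bigr => x _; rewrite mxE.
rewrite (eq_bigr (fun s : 'S_d => \sum_(f : {ffun 'I_d -> 'I_n}) (-1) ^+ s * \prod_i G s i (f i))); last first.
  by move=> s _; rewrite big_distrr.
rewrite exchange_big; apply: eq_bigr => f _.
rewrite /determinant big_distrl /=; apply: eq_bigr => s _.
rewrite -mulrA; congr (_ * _); rewrite /G big_split /= mulrC; congr (_ * _).
by apply: eq_bigr => i _; rewrite mxE.
Qed.

Lemma cauchy_binet n d (t0 : ext_index n d) (X : 'M[F]_(d,n)) (Y : 'M[F]_(n,d)) :
  \det (X *m Y) = \sum_(t : ext_index n d)
     \det (\matrix_(i,j) X i (tnth (val t) j)) * \det (\matrix_(i,j) Y (tnth (val t) i) j).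
Proof.
rewrite cb_step1 (bigID (fun f : {ffun 'I_d -> 'I_n} => injectiveb f)) /=.
rewrite [X in _ + X]big1 ?addr0 => [|f /injectivePn [i1 [i2 Di12 Ef12]]]; last first.
  by rewrite (determinant_alternate Di12) ?mul0r // => j; rewrite !mxE Ef12.
rewrite (reindex_onto (@hcb n d) (fun f => (tsort t0 f, sigf f))) /=; last first.
  by move=> f /injectiveP fi; apply: hcbK.
rewrite (eq_bigl xpredT) => [|p]; last first.
  by rewrite hcbK' eqxx andbT; apply/injectiveP/hcb_inj.
symmetry; rewrite (eq_bigr (fun t => \sum_(sg : 'S_d)
   \det (\matrix_(i, j) Y (hcb (t, sg) i) j) * \prod_i X i (hcb (t, sg) i))).
  by rewrite pair_bigA; apply: eq_bigr => -[t sg] _.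
move=> t _.
set Yt := \matrix_(i,j) Y (tnth (val t) i) j.
rewrite (eq_bigr (fun sg : 'S_d => \det Yt * ((-1) ^+ sg * \prod_i X i (tnth (val t) (sg i))))).
  rewrite -big_distrr /= mulrC; congr (_ * _).
  by rewrite /determinant; apply: eq_bigr => sg _; congr (_ * _); apply: eq_bigr => i _; rewrite mxE.
move=> sg _.
have -> : \matrix_(i, j) Y (hcb (t, sg) i) j = row_perm sg Yt.
  by apply/matrixP => i j; rewrite !mxE ffunE.
rewrite row_permE det_mulmx det_perm mulrCA mulrA; congr (_ * _).
by apply: eq_bigr => i _; rewrite ffunE.
Qed.
End CB.


Section Ext.
Variable F : fieldType.

Definition minor n d (M : 'M[F]_n) (S T : ext_index n d) : F :=
  \det (\matrix_(i < d, j < d) M (tnth (val S) i) (tnth (val T) j)).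

Lemma ext_powerE n d (M : 'M[F]_n) a b :
  ext_power d M a b = minor M (enum_val a) (enum_val b).
Proof. by rewrite mxE. Qed.

Lemma ext_diff n d (S T : ext_index n d) :
  S != T -> exists i, tnth (val S) i \notin val T.
Proof.
move=> neq; apply/existsP; apply: contraR neq; rewrite negb_exists => /forallP H.
have sub : {subset val S <= val T}.
  by move=> x /tnthP [i ->]; have := H i; rewrite negbK.
have [_ eqST] := uniq_min_size (ext_uniq S) sub (eq_leq (etrans (size_tuple _) (esym (size_tuple _)))).
have := valP S; have := valP T => /= hT hS.
apply/eqP; apply: val_inj; apply: val_inj.
exact: (irr_sorted_eq (@ltn_tr' n) (@ltn_irr' n) hS hT eqST).
Qed.

Lemma minor_idrows n d (M : 'M[F]_n) (S T : ext_index n d) :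
  (forall i c, M (tnth (val S) i) c = (tnth (val S) i == c)%:R) ->
  minor M S T = (S == T)%:R.
Proof.
move=> HM; rewrite /minor; case: eqP => [<-|/eqP neq].
  rewrite -[RHS](det1 F d); congr (\det _); apply/matrixP => i j.
  rewrite !mxE HM; congr (_%:R).
  by rewrite (inj_eq (tuple_uniqP _ (ext_uniq S))).
have [i Hi] := ext_diff neq.
rewrite (expand_det_row _ i) big1 // => j _; rewrite mxE HM.
case: eqP => [e|_]; last by rewrite mul0r.
by move: Hi; rewrite e mem_tnth.
Qed.

Lemma ext_power1 n d : ext_power d (1%:M : 'M[F]_n) = 1%:M.
Proof.
apply/matrixP => a b; rewrite ext_powerE minor_idrows; last by move=> i c; rewrite mxE.
by rewrite mxE (inj_eq enum_val_inj).
Qed.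

Lemma ext_powerM n d (t0 : ext_index n d) (A B : 'M[F]_n) :
  ext_power d (A *m B) = ext_power d A *m ext_power d B.
Proof.
apply/matrixP => a b; rewrite ext_powerE mxE /minor.
pose X := \matrix_(i < d, k < n) A (tnth (val (enum_val a)) i) k.
pose Y := \matrix_(k < n, j < d) B k (tnth (val (enum_val b)) j).
have -> : \matrix_(i, j) (A *m B) (tnth (val (enum_val a)) i) (tnth (val (enum_val b)) j) = X *m Y.
  by apply/matrixP => i j; rewrite !mxE; apply: eq_bigr => k _; rewrite !mxE.
rewrite (cauchy_binet t0) (big_enum_val (A := predT)) /=.
apply: eq_bigr => c _; rewrite !ext_powerE /minor.
by congr (_ * _); congr (\det _); apply/matrixP => i j; rewrite !mxE.
Qed.
End Ext.


Section Main1.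
Variable F : fieldType.

Lemma det_rank1 d (u : 'cV[F]_d) (v : 'rV[F]_d) :
  \det (1%:M + u *m v) = 1 + (v *m u) 0 0.
Proof.
pose L1 : 'M[F]_(d + 1) := block_mx 1%:M 0 v 1%:M.
pose L2 : 'M[F]_(d + 1) := block_mx 1%:M 0 (- v) 1%:M.
pose B : 'M[F]_(d + 1) := block_mx (1%:M + u *m v) u 0 1%:M.
have E : L1 *m B *m L2 = block_mx 1%:M u 0 (1%:M + v *m u).
  rewrite /L1 /B /L2 !mulmx_block.
  rewrite !mul1mx !mul0mx !mulmx0 !mulmx1 !addr0 !add0r.
  congr block_mx.
  - by rewrite mulmxN addrK.
  - by rewrite mulmxDr mulmx1 mulmxDl mul1mx !mulmxN mulmxA addrA addrK subrr.
  - by rewrite addrC.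
have := congr1 determinant E.
rewrite !det_mulmx /L1 /L2 /B !det_lblock !det_ublock !det1 !mul1r !mulr1 det_mx11 => ->.
by rewrite !mxE.
Qed.
End Main1.

Section Refl.
Variable F : fieldType.

Lemma refl_rank1 n (M : 'M[F]_n) (v : 'cV[F]_n) :
  \rank (M - 1%:M) = 1%N -> reflection_vector M v ->
  exists g : 'rV[F]_n, M - 1%:M = v *m g.
Proof.
move=> r1 [nz sub].
have := (mxrank_leqif_sup sub).2.
have nzT : v^T != 0 by apply: contra nz => /eqP e; rewrite -[v]trmxK e trmx0.
rewrite [\rank (M - _)^T]mxrank_tr r1 rank_rV nzT eqxx.
move=> /esym/submxP [D eD]; exists D^T.
by rewrite -[M - _]trmxK eD trmx_mul trmxK.
Qed.

Lemma mu_ne1 n (M : 'M[F]_n) v mu :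
  is_reflection M -> reflection_vector M v -> M *m v = mu *: v -> mu != 1.
Proof.
move=> [[P Pu dP] r1] rv Mv; apply/eqP => mu1; subst mu.
have [g eg] := refl_rank1 r1 rv.
have [nz _] := rv.
have N0 : (M - 1%:M) *m (M - 1%:M) = 0.
  have : (M - 1%:M) *m v = 0 by rewrite mulmxBl Mv scale1r mul1mx subrr.
  rewrite eg -mulmxA => gv0.
  have gv : g *m v = 0.
    apply/matrixP => i j; rewrite !ord1 mxE.
    apply: contraNeq nz => nzgv; rewrite mxE in nzgv; apply/eqP; apply/matrixP => a b.
    move/matrixP: gv0 => /(_ a b); rewrite !ord1 !mxE big_ord1 mxE => /eqP.
    by rewrite mulf_eq0 (negPf nzgv) orbF => /eqP.
  by rewrite mulmxA -(mulmxA v) gv mulmx0 mul0mx.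
have offd := (diagonalizable_forP _ Pu) dP.
pose E := P *m (M - 1%:M) *m invmx P.
have offE i j : i != j -> E i j = 0.
  move=> ij; rewrite /E mulmxBr mulmxBl mulmx1 mulmxV // mxE offd // mxE.
  by rewrite mxE (negPf ij) subr0.
have EE : E *m E = 0.
  by rewrite /E !mulmxA mulmxKV // -(mulmxA P) N0 mulmx0 mul0mx.
have E0 : E = 0.
  apply/matrixP => i j; rewrite [RHS]mxE; case: (eqVneq i j) => [<-|]; last exact: offE.
  move/matrixP: EE => /(_ i i); rewrite [in X in X = _]mxE [RHS]mxE (bigD1 i) //= big1 ?addr0.
    by move/eqP; rewrite mulf_eq0 orbb => /eqP.
  by move=> k ki; rewrite offE ?mul0r // eq_sym.
have : M - 1%:M = 0.
  have -> : M - 1%:M = invmx P *m E *m P.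
    by rewrite /E !mulmxA mulVmx // mul1mx mulmxKV.
  by rewrite E0 mulmx0 mul0mx.
by move=> M0; move: r1; rewrite M0 mxrank0.
Qed.
End Refl.

Section Basis.
Variable F : fieldType.

Lemma mybasis_free m n (A : 'M[F]_(m.+1, n)) :
  row_free A -> exists2 Q : 'M_n, Q \in unitmx & pid_mx m.+1 *m Q = A.
Proof.
move=> fA; have rA : \rank A = m.+1 by apply/eqP.
have le : (m.+1 <= n)%N by rewrite -rA rank_leq_col.
set L := col_ebase A; set U := row_ebase A.
pose J : 'M[F]_(n, m.+1) := pid_mx m.+1.
pose K : 'M[F]_(m.+1, n) := pid_mx m.+1.
have KJ : K *m J = 1%:M by rewrite mul_pid_mx !minnn (minn_idPr le) pid_mx_1.
have JJ : (J *m K) *m (J *m K) = J *m K by rewrite -mulmxA (mulmxA K) KJ mul1mx.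
pose Ext (X : 'M[F]_m.+1) : 'M[F]_n := J *m X *m K + (1%:M - J *m K).
have ExtM X Y : Ext X *m Ext Y = Ext (X *m Y).
  rewrite /Ext mulmxDl !mulmxDr !mulmxN !mulmxBl !mulmx1 !mul1mx.
  have e1 : J *m X *m K *m (J *m Y *m K) = J *m (X *m Y) *m K.
    by rewrite -!mulmxA (mulmxA K) KJ mul1mx !mulmxA.
  have e2 : J *m X *m K *m (J *m K) = J *m X *m K.
    by rewrite -!mulmxA (mulmxA K) KJ mul1mx.
  have e3 : J *m K *m (J *m Y *m K) = J *m Y *m K.
    by rewrite !mulmxA -(mulmxA J) KJ mulmx1.
  by rewrite e1 e2 e3 JJ !subrr addr0 add0r subr0.
have Lu : L \in unitmx by apply: col_ebase_unit.
have Eu : Ext L \in unitmx.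
  case: (@mulmx1_unit _ _ (Ext L) (Ext (invmx L))) => //.
  by rewrite ExtM mulmxV // /Ext mulmx1 addrC subrK.
exists (Ext L *m U); first by rewrite unitmx_mul Eu row_ebase_unit.
rewrite mulmxA /Ext mulmxDr -/K.
have -> : K *m (J *m L *m K) + K *m (1%:M - J *m K) = L *m K.
  by rewrite mulmxBr mulmx1 !mulmxA KJ !mul1mx subrr addr0.
by have := mulmx_ebase A; rewrite rA.
Qed.


Lemma mybasis_dep m n (B : 'M[F]_(m, n)) :
  exists2 Q : 'M_n, Q \in unitmx &
    forall i (c : 'I_n), (\rank B <= c)%N -> (B *m invmx Q) i c = 0.
Proof.
exists (row_ebase B); first exact: row_ebase_unit.
move=> i c rc; rewrite -{1}(mulmx_ebase B) mulmxK ?row_ebase_unit //.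
rewrite mxE big1 // => l _; rewrite mxE.
case: eqP => [e|]; last by rewrite andFb mulr0.
by rewrite e ltnNge rc andbF mulr0.
Qed.
End Basis.

Section ExtArg.
Variable F : fieldType.

Lemma S0_ex n d : (d <= n)%N ->
  exists S0 : ext_index n d, forall k, nat_of_ord (tnth (val S0) k) = k.
Proof.
move=> le.
have so : sorted (fun x y : 'I_n => (x < y)%N) [tuple widen_ord le i | i < d].
  rewrite /= sorted_map.
  by have := iota_ltn_sorted 0 d; rewrite -val_enum_ord sorted_map.
by exists (@exist _ (fun t : d.-tuple 'I_n => sorted (fun x y : 'I_n => (x < y)%N) t) _ so) => k; rewrite /= tnth_mktuple.
Qed.

Lemma not_S0 n d (S0 S : ext_index n d) :
  (forall k, nat_of_ord (tnth (val S0) k) = k) -> S != S0 ->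
  exists k, (d <= tnth (val S) k)%N.
Proof.
move=> hS0 neq; have [k Hk] := ext_diff neq; exists k.
rewrite leqNgt; apply: contra Hk => lt.
apply/tnthP; exists (Ordinal lt); apply: val_inj; rewrite /=; by move: (hS0 (Ordinal lt)) => /= ->.
Qed.

Lemma V2eig n d (S0 : ext_index n d) (M : 'M[F]_n) :
  (forall k, nat_of_ord (tnth (val S0) k) = k) ->
  (forall r c : 'I_n, (c < d)%N -> (d <= r)%N -> M r c = 0) ->
  ext_power d M *m delta_mx (enum_rank S0) (0 : 'I_1) =
    minor M S0 S0 *: delta_mx (enum_rank S0) (0 : 'I_1).
Proof.
move=> hS0 HM; apply/matrixP => a z; rewrite !mxE (bigD1 (enum_rank S0)) //=.
rewrite big1 => [|b /negPf nb]; last by rewrite [delta_mx _ _ b z]mxE nb mulr0.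
rewrite addr0 !mxE (ord1 z) !eqxx andbT mulr1 enum_rankK -/(minor M (enum_val a) S0).
case: (eqVneq a (enum_rank S0)) => [->|na]; first by rewrite enum_rankK mulr1.
rewrite mulr0.
have neq : enum_val a != S0.
  by apply: contra na => /eqP <-; rewrite enum_valK.
have [k Hk] := not_S0 hS0 neq.
rewrite /minor (expand_det_row _ k) big1 // => j _; rewrite mxE HM ?mul0r //.
by rewrite hS0.
Qed.

Lemma V1zero n d (le : (d.+1 <= n)%N) (M : 'I_d.+1 -> 'M[F]_n) (c : 'I_d.+1 -> F)
  (x : 'cV[F]_(ext_dim n d)) :
  (forall i (r col : 'I_n), r != widen_ord le i -> M i r col = (r == col)%:R) ->
  (forall i, c i != 1) -> (forall i, ext_power d (M i) *m x = c i *: x) -> x = 0.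
Proof.
move=> HM Hc Hx; apply/matrixP => a z; rewrite (ord1 z) [RHS]mxE.
set S := enum_val a.
have [i Hi] : exists i, widen_ord le i \notin val S.
  apply/existsP; apply: contraT; rewrite negb_exists => /forallP H.
  have sub : {subset map (widen_ord le) (enum 'I_d.+1) <= val S}.
    by move=> y /mapP [i _ ->]; have := H i; rewrite negbK.
  have := uniq_leq_size _ sub; rewrite size_map size_enum_ord size_tuple ltnn.
  apply; rewrite map_inj_uniq ?enum_uniq // => u w /(congr1 val) /= e; exact: val_inj.
move/matrixP: (Hx i) => /(_ a 0); rewrite !mxE (bigD1 a) //= big1 => [|b nb].
  rewrite addr0 ext_powerE minor_idrows; last first.
    move=> k col; apply: HM; apply: contra Hi => /eqP <-; exact: mem_tnth.
  rewrite eqxx mul1r => /eqP; rewrite -subr_eq0 -{1}[x a 0]mul1r -mulrBl mulf_eq0.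
  by rewrite subr_eq0 eq_sym (negPf (Hc i)) => /eqP.
rewrite ext_powerE minor_idrows; last first.
  move=> k col; apply: HM; apply: contra Hi => /eqP <-; exact: mem_tnth.
by rewrite (inj_eq enum_val_inj) eq_sym (negPf nb) mul0r.
Qed.
End ExtArg.

Section Conj.
Variable F : fieldType.

Lemma conj_rank1 n (P R : 'M[F]_n) (a : 'cV_n) (g : 'rV_n) :
  P \in unitmx -> R - 1%:M = a *m g ->
  invmx P *m R *m P = 1%:M + (invmx P *m a) *m (g *m P).
Proof.
move=> Pu eg; rewrite -[R](subrK 1%:M) eg mulmxDr mulmxDl mulmx1 mulVmx //.
by rewrite addrC !mulmxA.
Qed.

Lemma V1_rows n (P R : 'M[F]_n) (a : 'cV_n) (g : 'rV_n) (i0 : 'I_n) :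
  P \in unitmx -> R - 1%:M = a *m g ->
  (forall r, r != i0 -> (invmx P *m a) r 0 = 0) ->
  forall r c, r != i0 -> (invmx P *m R *m P) r c = (r == c)%:R.
Proof.
move=> Pu eg ha r c ri; rewrite (conj_rank1 Pu eg) !mxE big_ord1 ha // mul0r addr0.
by rewrite eq_sym.
Qed.

Lemma sum_S0 n d (S0 : ext_index n d) (G : 'I_n -> F) :
  (forall k, nat_of_ord (tnth (val S0) k) = k) ->
  (forall r : 'I_n, (d <= r)%N -> G r = 0) ->
  \sum_(r < n) G r = \sum_(k < d) G (tnth (val S0) k).
Proof.
move=> hS0 hG.
have cnt (r : 'I_n) : \sum_(k < d) (r == tnth (val S0) k)%:R = (r < d)%:R :> F.
  case: ltnP => rd.
    rewrite (bigD1 (Ordinal rd)) //= big1 ?addr0.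
      by have -> : r == tnth (val S0) (Ordinal rd) by apply/eqP/val_inj; rewrite /= hS0.
    move=> k kr; case: eqP => // e; move: kr; rewrite -(inj_eq val_inj) /=.
    by rewrite -hS0 -e eqxx.
  rewrite big1 // => k _; case: eqP => // e; move: rd; rewrite e hS0 leqNgt ltn_ord.
  done.
transitivity (\sum_(r < n) \sum_(k < d) (r == tnth (val S0) k)%:R * G r).
  apply: eq_bigr => r _; rewrite -big_distrl /= cnt.
  by case: ltnP => rd; rewrite ?mul1r // hG ?mulr0.
rewrite exchange_big; apply: eq_bigr => k _.
rewrite (bigD1 (tnth (val S0) k)) //= eqxx mul1r big1 ?addr0 // => r /negPf ->.
by rewrite mul0r.
Qed.

Lemma V2_gen n d (S0 : ext_index n d) (R P : 'M[F]_n) (b : 'cV_n) (mu : F) (g : 'rV_n) :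
  (forall k, nat_of_ord (tnth (val S0) k) = k) ->
  P \in unitmx -> R - 1%:M = b *m g -> R *m b = mu *: b -> b != 0 ->
  (forall r : 'I_n, (d <= r)%N -> (invmx P *m b) r 0 = 0) ->
  minor (invmx P *m R *m P) S0 S0 = mu /\
  (forall r c : 'I_n, (c < d)%N -> (d <= r)%N -> (invmx P *m R *m P) r c = 0).
Proof.
move=> hS0 Pu eg Rb nzb hb.
have ME := conj_rank1 Pu eg.
set b' := invmx P *m b; set g' := g *m P.
have nzb' : b' != 0.
  apply: contra nzb => /eqP e; by rewrite -(mulKVmx Pu b) -/b' e mulmx0.
split; last first.
  by move=> r c cd dr; rewrite ME !mxE big_ord1 hb // mul0r addr0; case: eqP => // e;
     move: cd; rewrite -e ltnNge dr.
have Mb : (invmx P *m R *m P) *m b' = mu *: b'.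
  by rewrite /b' mulmxA mulmxK // -mulmxA Rb scalemxAr.
have gb : (g' *m b') 0 0 = mu - 1.
  move: Mb; rewrite ME mulmxDl mul1mx -mulmxA => /(congr1 (fun X => X - b')).
  rewrite addrC addKr -/b' -/g'.
  have -> : mu *: b' - b' = (mu - 1) *: b' by rewrite scalerBl scale1r.
  move=> e.
  have [r nzr] : exists r, b' r 0 != 0.
    apply/existsP; apply: contraR nzb' => /existsPn H; apply/eqP/matrixP => r z.
    by rewrite (ord1 z) [RHS]mxE; apply/eqP; have := H r; rewrite negbK.
  move/matrixP: e => /(_ r 0); rewrite [LHS]mxE big_ord1 [RHS]mxE mulrC.
  by move/(mulIf nzr).
rewrite /minor.
have -> : \matrix_(i, j) (invmx P *m R *m P) (tnth (val S0) i) (tnth (val S0) j) =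
  1%:M + (\col_k b' (tnth (val S0) k) 0) *m (\row_l g' 0 (tnth (val S0) l)).
  apply/matrixP => i j; rewrite ME !mxE big_ord1 !mxE.
  by rewrite big_ord1 !mxE (inj_eq (tuple_uniqP _ (ext_uniq S0))).
rewrite det_rank1 !mxE.
rewrite (eq_bigr (fun k => g' 0 (tnth (val S0) k) * b' (tnth (val S0) k) 0)); last first.
  by move=> k _; rewrite !mxE.
rewrite -(sum_S0 (G := fun r => g' 0 r * b' r 0)) //; last first.
  by move=> r dr; rewrite hb // mulr0.
have <- : (g' *m b') 0 0 = \sum_(r < n) g' 0 r * b' r 0 by rewrite mxE.
by rewrite gb addrC subrK.
Qed.
End Conj.

Lemma sum_delta (F : fieldType) n (a : 'I_n) (G : 'I_n -> F) :
  \sum_(r < n) (r == a)%:R * G r = G a.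
Proof.
rewrite (bigD1 a) //= eqxx mul1r big1 ?addr0 // => r /negPf ->; by rewrite mul0r.
Qed.

Unset Implicit Arguments.

Theorem lemma5p4
  (F : fieldType) (F_char0 : [pchar F] =i pred0)
  (W : groupType) (k : nat) (s : 'I_k -> W) (gen : generates s)
  (n : nat) (rho1 rho2 : W -> 'M[F]_n)
  (rep1 : is_rep rho1) (rep2 : is_rep rho2)
  (irr1 : rep_irreducible rho1) (irr2 : rep_irreducible rho2)
  (refl1 : forall i, is_reflection (rho1 (s i)))
  (refl2 : forall i, is_reflection (rho2 (s i)))
  (alpha beta : 'I_k -> 'cV[F]_n) (lambda mu : 'I_k -> F)
  (ha : forall i, reflection_vector (rho1 (s i)) (alpha i))
  (hb : forall i, reflection_vector (rho2 (s i)) (beta i))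
  (hla : forall i, rho1 (s i) *m alpha i = lambda i *: alpha i)
  (hmb : forall i, rho2 (s i) *m beta i = mu i *: beta i)
  (d : nat) (hd1 : (1 <= d)%N) (hd2 : (d <= n.-1)%N)
  (psi : 'M[F]_(ext_dim n d)) (hpsi : ext_W_iso rho1 rho2 psi)
  (j : 'I_d.+1 -> 'I_k) :
  row_free (\matrix_(i < d.+1) (alpha (j i))^T) ->
  row_free (\matrix_(i < d.+1) (beta (j i))^T).
Proof.
set A := \matrix_(i < d.+1) (alpha (j i))^T.
set B := \matrix_(i < d.+1) (beta (j i))^T.
move=> fA; apply/idPn => nfB.
have le : (d.+1 <= n)%N by apply: leq_ltn_trans hd2 _; rewrite ltn_predL; exact: irr1.1.
have rB : (\rank B <= d)%N.
  by rewrite -ltnS ltn_neqAle rank_leq_row andbT.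
have [S0 hS0] := S0_ex (ltnW le).
pose Cx (X : 'M[F]_n) := ext_power d X.
have CM X Y : Cx (X *m Y) = Cx X *m Cx Y by apply: ext_powerM.
have Cu X : X \in unitmx -> Cx X \in unitmx.
  move=> Xu; case: (@mulmx1_unit _ _ (Cx X) (Cx (invmx X))) => //.
  by rewrite -CM mulmxV // /Cx ext_power1.
have [psiu hpsiw] := hpsi.
have [Q1 Q1u hQ1] := mybasis_free fA.
have [Q2 Q2u hQ2] := mybasis_dep B.
set P1 := Q1^T; set P2 := Q2^T.
have P1u : P1 \in unitmx by rewrite unitmx_tr.
have P2u : P2 \in unitmx by rewrite unitmx_tr.
pose e : 'cV[F]_(ext_dim n d) := delta_mx (enum_rank S0) 0.
have V2 i : Cx (rho2 (s (j i))) *m (Cx P2 *m e) = mu (j i) *: (Cx P2 *m e).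
  set R := rho2 (s (j i)).
  have [g eg] := refl_rank1 (refl2 (j i)).2 (hb (j i)).
  have hbz : forall r : 'I_n, (d <= r)%N -> (invmx P2 *m beta (j i)) r 0 = 0.
    move=> r dr; transitivity ((B *m invmx Q2) i r); last exact: hQ2 (leq_trans rB dr).
    rewrite /P2 -trmx_inv !mxE; apply: eq_bigr => c _; rewrite !mxE mulrC.
    done.
  have [mm hM] := V2_gen hS0 P2u eg (hmb (j i)) (hb (j i)).1 hbz.
  have := V2eig hS0 hM; rewrite mm => E.
  have PM : P2 *m (invmx P2 *m R *m P2) = R *m P2 by rewrite !mulmxA mulmxV // mul1mx.
  by rewrite mulmxA -CM -PM CM -mulmxA /Cx E scalemxAr.
pose x1 := invmx psi *m (Cx P2 *m e).
have V1 i : ext_power d (rho1 (s (j i))) *m x1 = mu (j i) *: x1.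
  apply: (can_inj (mulKmx psiu)); rewrite mulmxA hpsiw -mulmxA /x1 (mulKVmx psiu).
  by rewrite -scalemxAr (mulKVmx psiu) V2.
pose y := invmx (Cx P1) *m x1.
have y0 : y = 0.
  apply: (V1zero (le := le) (M := fun i => invmx P1 *m rho1 (s (j i)) *m P1)
                    (c := fun i => mu (j i))).
  - move=> i r col ri /=.
    have [g eg] := refl_rank1 (refl1 (j i)).2 (ha (j i)).
    apply: (V1_rows P1u eg _ col ri) => r' r'i.
    have : invmx P1 *m A^T = pid_mx d.+1.
      by rewrite -hQ1 trmx_mul tr_pid_mx mulmxA mulVmx // mul1mx.
    move/matrixP => /(_ r' i); rewrite mxE.
    rewrite (eq_bigr (fun c => invmx P1 r' c * alpha (j i) c 0)); last first.
      by move=> c _; rewrite !mxE.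
    move=> H; rewrite mxE H mxE; case: eqP => // er; move: r'i.
    by rewrite -(inj_eq val_inj) /= er eqxx.
  - by move=> i; apply: (mu_ne1 (refl2 (j i)) (hb (j i)) (hmb (j i))).
  - move=> i; apply: (can_inj (mulKmx (Cu _ P1u))).
    have PM : P1 *m (invmx P1 *m rho1 (s (j i)) *m P1) = rho1 (s (j i)) *m P1.
      by rewrite !mulmxA mulmxV // mul1mx.
    rewrite mulmxA -/(Cx _) -CM PM CM -mulmxA /y (mulKVmx (Cu _ P1u)) V1.
    by rewrite -scalemxAr (mulKVmx (Cu _ P1u)).
have : e = 0.
  apply: (can_inj (mulKmx (Cu _ P2u))); rewrite mulmx0.
  have -> : Cx P2 *m e = psi *m x1 by rewrite /x1 (mulKVmx psiu).
  by rewrite -[x1](mulKVmx (Cu _ P1u)) -/y y0 !mulmx0.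
by move/matrixP => /(_ (enum_rank S0) 0); rewrite !mxE !eqxx => /eqP; rewrite oner_eq0.
Qed.
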